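(* For $1\le i\le n$ let $f_i:\mathbb{Z}\to\mathbb{R}$ be bounded below and such that $(\mathbb{Z},f_i)$ is a one-dimensional Ameso($0$) pair, let $a_1,\dots,a_n\ge 0$, and define $g:\mathbb{Z}^n\to\mathbb{R}$ by $g(\vec y)=\sum_{i=1}^n a_if_i(y_i)$. Then $(\mathbb{Z}^n,g)$ is an Ameso($0$) pair.
   Context: Floors and ceilings of vectors are taken componentwise. A set $D^n\subseteq\mathbb{Z}^n$ is an Ameso set if $\lceil(\vec x+\vec y)/2\rceil,\lfloor(\vec x+\vec y)/2\rfloor\in D^n$ for all $\vec x,\vec y\in D^n$. For $C\ge 0$, $(D^n,f)$ is an Ameso($C$) pair if $D^n$ is an Ameso set, $f:D^n\to\mathbb{R}$ is bounded below, and $f(\vec x)+f(\vec y)+C\ge f(\lceil(\vec x+\vec y)/2\rceil)+f(\lfloor(\vec x+\vec y)/2\rfloor)$ for all $\vec x,\vec y\in D^n$. *)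

(* Defs.v *)
From mathcomp Require Import all_boot all_order all_algebra.
From mathcomp Require Import reals.
Set Implicit Arguments. Unset Strict Implicit. Unset Printing Implicit Defensive.
Import Order.TTheory GRing.Theory Num.Theory.
Local Open Scope ring_scope.

Definition zvec (n : nat) := 'I_n -> int.

Definition midceil n (x y : zvec n) : zvec n :=
  fun i => Num.ceil (((x i + y i)%:~R : rat) / 2).
Definition midfloor n (x y : zvec n) : zvec n :=
  fun i => Num.floor (((x i + y i)%:~R : rat) / 2).

Definition Ameso_set n (D : zvec n -> Prop) : Prop :=
  forall x y, D x -> D y -> D (midceil x y) /\ D (midfloor x y).

Definition bounded_below_on (R : realType) n (D : zvec n -> Prop)
  (f : zvec n -> R) : Prop :=
  exists m : R, forall x, D x -> m <= f x.

Definition Ameso_pair (R : realType) (C : R) n (D : zvec n -> Prop)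
  (f : zvec n -> R) : Prop :=
  0 <= C /\ Ameso_set D /\ bounded_below_on D f /\
  forall x y, D x -> D y ->
    f (midceil x y) + f (midfloor x y) <= f x + f y + C.

Definition Zn n : zvec n -> Prop := fun _ => True.

(* Main.v *)
Require Import Defs.
From mathcomp Require Import all_boot all_order all_algebra.
From mathcomp Require Import reals.
Import Order.TTheory GRing.Theory Num.Theory.
Local Open Scope ring_scope.

Theorem mainTheorem9 (R : realType) (n : nat) (f : 'I_n -> int -> R)
  (a : 'I_n -> R) :
  (forall i, exists m : R, forall z : int, m <= f i z) ->
  (forall i, Ameso_pair (0 : R) (@Zn 1%N) (fun v : zvec 1 => f i (v ord0))) ->
  (forall i, 0 <= a i) ->
  Ameso_pair (0 : R) (@Zn n) (fun y : zvec n => \sum_(i < n) a i * f i (y i)).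
Proof.
move=> hb hA ha; split; first exact: lexx.
split; first by [].
split.
  have [m hm] := fin_all_exists hb.
  exists (\sum_(i < n) a i * m i) => x _.
  by apply: ler_sum => i _; apply: ler_wpM2l => //; apply: hm.
move=> x y _ _; rewrite addr0 -!big_split /=.
apply: ler_sum => i _.
have [_ [_ [_ H]]] := hA i.
have := H (fun _ => x i) (fun _ => y i) I I.
rewrite addr0 /= => Hi.
by rewrite -!mulrDr; apply: ler_wpM2l => //.
Qed.
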